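(* Let $G=(V,E,\omega)$ be a weighted directed graph with $V=\{1,\dots,n\}$, let $\lambda_0\in\mathbb{C}$ be an eigenvalue of $M_G$ and let $u=(u_1,\dots,u_n)\in\mathbb{C}^n$ satisfy $M_G u=\lambda_0 u$, $u\neq 0$. Assume that $S=\{m+1,\dots,n\}$ is a $\lambda_0$-structural set of $G$. Then $\lambda_0$ is an eigenvalue of the reduced matrix $R_S(G,\lambda_0)$, and $R_S(G,\lambda_0)\,u_S=\lambda_0\,u_S$, where $u_S=(u_{m+1},\dots,u_n)$ is the restriction of $u$ to $S$.
   Context: Let $G=(V,E,\omega)$ be a weighted directed graph with vertex set $V=\{1,\dots,n\}$, edge set $E\subset V\times V$ and weight function $\omega:E\to\mathbb{C}$; set $\omega(i,j)=0$ whenever $(i,j)\notin E$. Its weighted adjacency matrix is $M_G=(\omega(i,j))_{i,j\in V}$ (acting on column vectors, so $(M_Gu)_i=\sum_j\omega(i,j)u_j$). A path is a sequence $(i_0,\dots,i_p)$ with $p\ge 1$ and $(i_\ell,i_{\ell+1})\in E$ for $0\le \ell\le p-1$, whose vertices are pairwise distinct except that possibly $i_0=i_p$; if $i_0=i_p$ the path is a cycle, and a cycle with $p=1$ is a loop. For $S\subset V$ write $\overline S=V\setminus S$. Given $\lambda\in\mathbb{C}$, a nonempty set $S\subset V$ is a $\lambda$-structural set of $G$ if (i) every cycle of $G$ that is not a loop contains a vertex of $S$, and (ii) $\omega(i,i)\neq\lambda$ for every $i\in\overline S$. A branch of $(G,S)$ is a path $\beta=(i_0,i_1,\dots,i_p)$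 whose interior vertices $i_1,\dots,i_{p-1}$ all lie in $\overline S$; $\mathscr B_{ij}$ denotes the set of branches with $i_0=i$ and $i_p=j$. The weight of a branch is $\omega(\beta,\lambda)=\omega(i_0,i_1)\prod_{\ell=1}^{p-1}\frac{\omega(i_\ell,i_{\ell+1})}{\lambda-\omega(i_\ell,i_\ell)}$. For $i,j\in S$ set $R_{ij}(G,S,\lambda)=\sum_{\beta\in\mathscr B_{ij}}\omega(\beta,\lambda)$; the reduced matrix $R_S(G,\lambda)$ is the $S\times S$ matrix with entries $R_{ij}(G,S,\lambda)$, $i,j\in S$. *)

(* Defs.v *)
From HB Require Import structures.
From mathcomp Require Import all_boot all_order all_algebra.
Set Implicit Arguments. Unset Strict Implicit. Unset Printing Implicit Defensive.
Import Order.TTheory GRing.Theory Num.Theory.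
Local Open Scope ring_scope.

(* Vertices are 'I_n (vertex i+1 of the paper is the ordinal i).
   The graph is given by an edge relation E and a weight matrix M with
   M i j = 0 whenever (i,j) is not an edge. *)

(* A path (i_0, i_1, ..., i_p) is represented by its start i_0 = i and the
   sequence s = [:: i_1; ...; i_p] (so p = size s >= 1). *)
Definition is_gpath n (E : rel 'I_n) (i : 'I_n) (s : seq 'I_n) : bool :=
  [&& s != [::], path E i s &
      (uniq (i :: s) || (uniq s && (last i s == i)))].

Definition is_gcycle n (E : rel 'I_n) (i : 'I_n) (s : seq 'I_n) : bool :=
  is_gpath E i s && (last i s == i).

Definition is_gloop n (E : rel 'I_n) (i : 'I_n) (s : seq 'I_n) : bool :=
  is_gcycle E i s && (size s == 1%N).

Definition structural_set (C : fieldType) n (E : rel 'I_n) (M : 'M[C]_n)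
    (lam : C) (S : {set 'I_n}) : Prop :=
  [/\ S != set0,
      (forall (i : 'I_n) (s : seq 'I_n),
          is_gcycle E i s -> ~~ is_gloop E i s -> has (mem S) (i :: s))
    & (forall i : 'I_n, i \notin S -> M i i != lam)].

(* branch of (G,S): a path whose interior vertices i_1..i_{p-1} lie outside S *)
Definition is_branch n (E : rel 'I_n) (S : {set 'I_n}) (i : 'I_n)
    (s : seq 'I_n) : bool :=
  is_gpath E i s && all (fun x => x \notin S) (behead (belast i s)).

Fixpoint branch_tail (C : fieldType) n (M : 'M[C]_n) (lam : C)
    (x : 'I_n) (s : seq 'I_n) : C :=
  match s with
  | [::] => 1
  | y :: s' => M x y / (lam - M x x) * branch_tail M lam y s'
  end.

Definition branch_weight (C : fieldType) n (M : 'M[C]_n) (lam : C)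
    (i : 'I_n) (s : seq 'I_n) : C :=
  match s with
  | [::] => 0
  | i1 :: s' => M i i1 * branch_tail M lam i1 s'
  end.

(* R_ij(G,S,lam): sum over all branches from i to j.  Every path has
   length p <= n, so the branches are exactly the sequences s of length
   p in 1..n with is_branch and last i s = j. *)
Definition reduced_entry (C : fieldType) n (E : rel 'I_n) (M : 'M[C]_n)
    (S : {set 'I_n}) (lam : C) (i j : 'I_n) : C :=
  \sum_(p < n) \sum_(t : p.+1.-tuple 'I_n | is_branch E S i t && (last i t == j))
      branch_weight M lam i t.

(* The set S = {m+1, ..., m+k} (0-based: ordinals >= m) of 'I_(m+k). *)
Definition tail_set m k : {set 'I_(m + k)} := [set i : 'I_(m + k) | (m <= i)%N].

(* Reduced matrix R_S(G,lam) for S = tail_set m k, indexed by 'I_k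
   (a : 'I_k corresponds to the vertex rshift m a of S). *)
Definition reduced_matrix (C : fieldType) m k (E : rel 'I_(m + k))
    (M : 'M[C]_(m + k)) (lam : C) : 'M[C]_k :=
  \matrix_(a < k, b < k)
     reduced_entry E M (tail_set m k) lam (rshift m a) (rshift m b).

Definition restrict_tail (C : fieldType) m k (u : 'cV[C]_(m + k)) : 'cV[C]_k :=
  \col_(a < k) u (rshift m a) 0.

(* Main.v *)
Require Import Defs.
From HB Require Import structures.
From mathcomp Require Import all_boot all_order all_algebra.
From mathcomp Require Import zify ring.
Import Order.TTheory GRing.Theory Num.Theory.
Local Open Scope ring_scope.

Lemma split_mem {T : eqType} {x : T} {s} : x \in s -> exists b p, s = b ++ x :: p.
Proof. by case/splitPr => b p; exists b, p. Qed.

Lemma uniq_neq {T : eqType} {x : T} {s} : uniq (x :: s) -> path (fun a b => a != b) x s.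
Proof.
elim: s x => //= y s IH x; rewrite inE negb_or => /andP [/andP [hxy _] /andP [hy hu]].
by rewrite hxy IH //= hy hu.
Qed.

Section Main.
Variables (C : numClosedFieldType) (m k : nat).
Local Notation n := (m + k).
Variables (E : rel 'I_n) (M : 'M[C]_n).
Hypothesis hM : forall i j : 'I_n, ~~ E i j -> M i j = 0.
Variables (lam : C) (u : 'cV[C]_n).
Hypothesis hu : M *m u = lam *: u.
Hypothesis hS : structural_set E M lam (tail_set m k).
Local Notation S := (tail_set m k).

Lemma inS (x : 'I_n) : (x \in S) = (m <= x)%N.
Proof. by rewrite inE. Qed.

Definition c (x y : 'I_n) : C := M x y / (lam - M x x).
Definition uu (x : 'I_n) : C := u x 0.
Definition E' : rel 'I_n := fun a b => E a b && (a != b).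

Fixpoint ssum (p : nat) (F : seq 'I_n -> C) : C :=
  if p is p'.+1 then \sum_x ssum p' (fun s => F (x :: s)) else F [::].

Lemma ssum_tuple p (F : seq 'I_n -> C) : \sum_(t : p.-tuple 'I_n) F t = ssum p F.
Proof.
elim: p F => [|p IH] F /=.
  by rewrite (big_pred1 [tuple]) // => t; apply/esym/eqP; exact: tuple0.
rewrite (reindex (fun xt : 'I_n * p.-tuple 'I_n => [tuple of xt.1 :: xt.2])) /=.
  rewrite -(pair_big (fun _ => true) (fun _ => true) (fun x t => F (x :: val t))) /=.
  apply: eq_bigr => x _; rewrite -IH; exact: eq_bigr.
exists (fun t : p.+1.-tuple 'I_n => (thead t, [tuple of behead t])).
  by move=> [x t] _ /=; rewrite theadE; congr pair; apply: val_inj.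
by move=> t _; rewrite [in RHS](tuple_eta t).
Qed.

Lemma eq_ssum p F G : (forall s, size s = p -> F s = G s) -> ssum p F = ssum p G.
Proof.
elim: p F G => [|p IH] F G h /=; first exact: h.
apply: eq_bigr => x _; apply: IH => s hs; apply: h; by rewrite /= hs.
Qed.

Lemma ssumZ p a F : ssum p (fun s => a * F s) = a * ssum p F.
Proof.
elim: p F => [|p IH] F //=; rewrite mulr_sumr; apply: eq_bigr => x _; exact: IH.
Qed.

Lemma ssum0 p : ssum p (fun _ => 0) = 0.
Proof. elim: p => //= p IH; exact: big1. Qed.

Lemma tail0 x s : ~~ path E x s -> branch_tail M lam x s = 0.
Proof.
elim: s x => [|y s IH] x //=; rewrite negb_and => /orP [/hM -> | /IH ->].
  by rewrite mul0r mul0r.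
by rewrite mulr0.
Qed.

Lemma pathE' x s : path E' x s = path E x s && path (fun a b => a != b) x s.
Proof.
elim: s x => //= y s IH x; rewrite IH /E'.
by case: (E x y); case: (x != y); case: (path E y s).
Qed.


Lemma ssumS p F : ssum p.+1 F = \sum_x ssum p (fun s => F (x :: s)).
Proof. by []. Qed.

Definition goodA (x : 'I_n) (s : seq 'I_n) : bool :=
  [&& path (fun a b => a != b) x s, last x s \in S & all (fun z => z \notin S) (belast x s)].

Lemma goodA_nil y : goodA y [::] = (y \in S).
Proof. by rewrite /goodA /= andbT. Qed.

Lemma goodA_cons x y s : goodA x (y :: s) = [&& x != y, x \notin S & goodA y s].
Proof.
rewrite /goodA /=.
by case: (x != y); case: (x \in S); case: (path _ y s); case: (last y s \in S).
Qed.

Definition A q x := ssum q.+1 (fun s => if goodA x s then branch_tail M lam x s * uu (last x s) else 0).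

Fixpoint B p x := if p is p'.+1 then
  \sum_y (if (x != y) && (y \notin S) then c x y * B p' y else 0) else uu x.

Lemma A_rec0 x : x \notin S ->
  A 0 x = \sum_y (if (x != y) && (y \in S) then c x y * uu y else 0).
Proof.
move=> hx; rewrite /A ssumS; apply: eq_bigr => y _.
rewrite [ssum 0 _]/= goodA_cons goodA_nil hx /= /c mulr1.
by case: (x != y); case: (y \in S).
Qed.

Lemma A_recS q x : x \notin S ->
  A q.+1 x = \sum_y (if (x != y) && (y \notin S) then c x y * A q y else 0).
Proof.
move=> hx; rewrite /A ssumS; apply: eq_bigr => y _.
case: ifP => [/andP [hxy hy]|hf].
  rewrite -ssumZ; apply: eq_ssum => s _.
  rewrite goodA_cons hxy hx /=; case: ifP => _; last by rewrite mulr0.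
  by rewrite /= /c mulrA.
rewrite -[RHS](ssum0 q.+1); apply: eq_ssum => s hs.
case: s hs => // z s _; rewrite !goodA_cons.
by case: ifP => // /and5P [h1 _ _ h2 _]; rewrite h1 h2 in hf.
Qed.

Lemma eig_row x : \sum_y M x y * uu y = lam * uu x.
Proof. by have := congr1 (fun A : 'cV[C]_n => A x 0) hu; rewrite !mxE. Qed.

Lemma u_expand x : x \notin S -> uu x = \sum_y (if x != y then c x y * uu y else 0).
Proof.
move=> hx; case: hS => _ _ /(_ x hx) hd.
have hne : lam - M x x != 0 by rewrite subr_eq0 eq_sym.
have e1 : \sum_(y | y != x) M x y * uu y = (lam - M x x) * uu x.
  move: (eig_row x); rewrite (bigD1 x) //= => h.
  rewrite mulrBl -h; ring.
rewrite -big_mkcond /=.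
transitivity ((\sum_(y | y != x) M x y * uu y) / (lam - M x x)).
  by rewrite e1 mulrC mulKf.
rewrite mulr_suml; apply: eq_big => [y|y _]; first by rewrite eq_sym.
by rewrite /c mulrAC.
Qed.

Lemma u_AB p x : x \notin S -> uu x = \sum_(q < p) A q x + B p x.
Proof.
elim: p x => [|p IH] x hx; first by rewrite big_ord0 add0r.
rewrite big_ord_recl /= (u_expand _ hx) A_rec0 //.
rewrite (eq_bigr (fun i : 'I_p => \sum_y (if (x != y) && (y \notin S) then c x y * A i y else 0))); last first.
  by move=> i _; rewrite /bump /= A_recS.
rewrite exchange_big /= -!big_split /=; apply: eq_bigr => y _.
have [<-|hxy] := eqVneq x y.
  by rewrite /= big1 // !addr0.
case hy: (y \in S) => /=.
  by rewrite big1 // !addr0.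
by rewrite (IH y (negbT hy)) mulrDr mulr_sumr add0r.
Qed.

Lemma walk_uniq x w : path E' x w -> all (fun z => z \notin S) (x :: w) -> uniq (x :: w).
Proof.
elim: w x => [|y w IH] x //= /andP [/andP [hE hxy] hp] /andP [hxS hall].
have hu' := IH y hp hall.
apply/andP; split; last exact: hu'; apply/negP => hin.
have [b [post e]] := split_mem hin.
case: hS => _ /(_ x (rcons b x)) hcyc _.
have hpE : path E x (y :: w) by rewrite /= hE; move: hp; rewrite pathE' => /andP [].
rewrite e cat_path /= in hpE.
move: hu'; rewrite e cat_uniq => /and3P [hub hnb _].
have hxb : x \notin b by apply: contra hnb => hxb; rewrite /= hxb.
have hb : b != [::].
  by case: b e {hxb hub hnb hpE hcyc} => //= [[hyx _]]; move: hxy; rewrite hyx eqxx.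
have hg : is_gcycle E x (rcons b x).
  rewrite /is_gcycle /is_gpath last_rcons eqxx rcons_path rcons_uniq hxb hub !andbT orbT.
  case/andP: hpE => -> /andP [-> _].
  by case: b {e hxb hub hnb hb hcyc}.
have hnl : ~~ is_gloop E x (rcons b x).
  by rewrite /is_gloop size_rcons eqSS size_eq0 (negbTE hb) andbF.
move: (hcyc hg hnl) => /hasP [z hz hzS0]; have hzS : z \in S := hzS0.
have : z \in x :: y :: w.
  by rewrite e; move: hz; rewrite !inE mem_cat -cats1 mem_cat !inE; case/orP => [->|/orP [->|->]]; rewrite ?orbT.
rewrite inE => /orP [/eqP hzx|hzw]; first by rewrite -hzx hzS in hxS.
have hall' : all (fun z => z \notin S) (y :: w) by []. 
by move/allP: hall' => /(_ z hzw); rewrite hzS.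
Qed.

Lemma size_notS s : uniq s -> all (fun z => z \notin S) s -> (size s <= m)%N.
Proof.
move=> hu1 hall; rewrite -(size_map val).
apply: (@leq_trans (size (iota 0 m))); last by rewrite size_iota.
apply: uniq_leq_size.
  by rewrite map_inj_uniq //; exact: val_inj.
move=> z /mapP [y hy ->]; rewrite mem_iota /= add0n.
by move/allP: hall => /(_ y hy); rewrite inS -ltnNge.
Qed.

Lemma B_zero p x0 r : (m <= size r + p)%N -> path E' x0 r ->
  all (fun z => z \notin S) (x0 :: r) -> B p (last x0 r) = 0.
Proof.
elim: p x0 r => [|p IH] x0 r hsz hp hall /=.
  have := size_notS _ (walk_uniq _ _ hp hall) hall; rewrite /= addn0 in hsz.
  by move=> /= h; move: (leq_trans h hsz); rewrite ltnn.
apply: big1 => y _; case: ifP => // /andP [hxy hy].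
case he: (E (last x0 r) y); last by rewrite /c hM ?he // mul0r mul0r.
have := IH x0 (rcons r y); rewrite last_rcons => ->; first by rewrite mulr0.
- by rewrite size_rcons addSnnS.
- by rewrite rcons_path hp /E' he hxy.
- by rewrite -rcons_cons all_rcons hy hall.
Qed.

Lemma B_zero1 p x : (m <= p)%N -> x \notin S -> B p x = 0.
Proof. by move=> hp hx; apply: (B_zero p x [::]) => //=; rewrite hx. Qed.

Lemma A_big q x : (m <= q)%N -> x \notin S -> A q x = 0.
Proof.
move=> hq hx; have h1 := u_AB q x hx; have h2 := u_AB q.+1 x hx.
rewrite B_zero1 // addr0 in h1.
rewrite big_ord_recr B_zero1 // in h2; last by apply: leqW.
by move: h2; rewrite {1}h1 addr0 => /eqP; rewrite -subr_eq0 opprD addrA subrr add0r oppr_eq0 => /eqP.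
Qed.

Lemma Ashift y : (0 < k)%N -> y \notin S ->
  \sum_(1 <= p < m + k) A p.-1 y = uu y.
Proof.
move=> hk hy; rewrite (big_cat_nat _ (n := m.+1)) //=; last by lia.
rewrite [X in _ + X]big_nat_cond [X in _ + X]big1 ?addr0; last first.
  by move=> p /andP [/andP [hp _] _]; apply: A_big => //; move: hp; clear; lia.
rewrite big_add1 /= big_mkord (u_AB m y hy) B_zero1 // addr0.
by apply: eq_bigr.
Qed.

Lemma T_rec0 i y : i \in S ->
  (if is_branch E S i [:: y] && (y \in S)
   then branch_weight M lam i [:: y] * uu y else 0)
  = (if y \in S then M i y * uu y else 0).
Proof.
move=> hi; rewrite /branch_weight /= mulr1.
have -> : is_branch E S i [:: y] = E i y.
  rewrite /is_branch /is_gpath /= !andbT.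
  by case: (E i y); rewrite //= inE; case: eqVneq => //= ->; rewrite eqxx.
case he: (E i y); first by [].
by rewrite /= hM ?he // mul0r; case: ifP.
Qed.

Lemma T_recS i y s : i \in S -> s != [::] ->
  (if is_branch E S i (y :: s) && (last y s \in S)
   then branch_weight M lam i (y :: s) * uu (last y s) else 0)
  = (if y \notin S then M i y *
       (if goodA y s then branch_tail M lam y s * uu (last y s) else 0) else 0).
Proof.
move=> hi hs.
case hp: (path E i (y :: s)); last first.
  have hw : M i y * branch_tail M lam y s = 0.
    move: hp => /= /negbT; rewrite negb_and => /orP [/hM -> | /tail0 ->].
      by rewrite mul0r.
    by rewrite mulr0.
  rewrite /branch_weight hw mul0r.
  rewrite if_same; case: ifP => _ //; case: ifP => _; [by rewrite mulrA hw mul0r | by rewrite mulr0].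
have key : (is_branch E S i (y :: s) && (last y s \in S)) = (y \notin S) && goodA y s.
  case: s hs hp => // z s _ hp.
  apply/idP/idP.
    case/andP => /andP [/and3P [_ _ huniq] hall] hlast.
    move: hall; rewrite /= => /andP [hyS hall].
    rewrite hyS /= /goodA /= hlast hyS hall /= andbT.
    have hu2 : uniq [:: y, z & s].
      by case/orP: huniq => [/= /andP [_ ->] | /andP [->]].
    by have := uniq_neq hu2.
  case/andP => hyS; rewrite /goodA => /and3P [hneq hlast hall].
  rewrite hlast andbT /is_branch /is_gpath hp (_ : behead (belast i [:: y, z & s]) = belast y (z :: s)) // hall andbT.
  have hlb : last z s \notin belast y (z :: s).
    by apply/negP => /(allP hall) /negP; rewrite hlast.
  have hub : uniq (belast y (z :: s)).
    apply: (walk_uniq y (belast z s)); last exact: hall.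
    have hp' : path E y (z :: s) by case/andP: hp.
    rewrite pathE'; move: hp' hneq; rewrite (lastI z s) !rcons_path => /andP [-> _] /andP [-> _].
    done.
  have hu2 : uniq [:: y, z & s] by rewrite (lastI y (z :: s)) rcons_uniq hlb hub.
  rewrite [uniq [:: i, y, z & s]]cons_uniq hu2 (_ : last i [:: y, z & s] = last z s) // andbT.
  case hne: (last z s == i); first by rewrite /= !orbT.
  rewrite orbF /=; apply/negP; rewrite (lastI y (z :: s)) mem_rcons inE => /orP [/eqP hil|].
    by move/eqP: hne; apply; rewrite hil.
  by move/(allP hall); rewrite hi.
rewrite key; case: (y \notin S); case: (goodA y s) => //=.
  by rewrite /branch_weight mulrA.
by rewrite mulr0.
Qed.

Definition T (i : 'I_n) p := \sum_(t : p.+1.-tuple 'I_n)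
  (if is_branch E S i t && (last i t \in S) then branch_weight M lam i t * uu (last i t) else 0).

Lemma T0 i : i \in S -> T i 0 = \sum_y (if y \in S then M i y * uu y else 0).
Proof.
move=> hi; rewrite /T (ssum_tuple 1 (fun t => if is_branch E S i t && (last i t \in S)
  then branch_weight M lam i t * uu (last i t) else 0)) ssumS.
by apply: eq_bigr => y _; rewrite /= T_rec0.
Qed.

Lemma TS i q : i \in S -> T i q.+1 = \sum_y (if y \notin S then M i y * A q y else 0).
Proof.
move=> hi; rewrite /T (ssum_tuple q.+2 (fun t => if is_branch E S i t && (last i t \in S)
  then branch_weight M lam i t * uu (last i t) else 0)) ssumS.
apply: eq_bigr => y _.
have -> : (if y \notin S then M i y * A q y else 0) =
  ssum q.+1 (fun s => if y \notin S then M i y *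
       (if goodA y s then branch_tail M lam y s * uu (last y s) else 0) else 0).
  by case: ifP => _; [rewrite ssumZ | rewrite ssum0].
apply: eq_ssum => s hs; rewrite -T_recS //; last by case: s hs.
Qed.

Lemma pick_S (l : 'I_n) (F : 'I_n -> C) :
  \sum_(b < k) (if l == rshift m b then F (rshift m b) else 0) = if l \in S then F l else 0.
Proof.
transitivity (\sum_(j : 'I_n) (if l == j then (if j \in S then F j else 0) else 0)).
  rewrite big_split_ord /= [X in _ = X + _]big1 ?add0r.
    by apply: eq_bigr => b _; rewrite inS /= leq_addr.
  by move=> j _; case: eqP => // _; rewrite inS /= leqNgt ltn_ord.
rewrite (bigD1 l) //= eqxx big1 ?addr0 //.
by move=> j /negbTE hj; rewrite eq_sym hj.
Qed.

Lemma sum_entries i : \sum_(b < k) reduced_entry E M S lam i (rshift m b) * uu (rshift m b)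
  = \sum_(p < n) T i p.
Proof.
under eq_bigr => b _ do rewrite /reduced_entry mulr_suml.
rewrite exchange_big /=; apply: eq_bigr => p _.
under eq_bigr => b _ do rewrite mulr_suml big_mkcond /=.
rewrite exchange_big /=; apply: eq_bigr => t _.
case: (is_branch E S i t) => /=; last by rewrite big1.
rewrite -(pick_S (last i t) (fun j => branch_weight M lam i t * uu j)).
by apply: eq_bigr => b _; case: ifP.
Qed.

Lemma main_row i : (0 < k)%N -> i \in S -> \sum_(p < n) T i p = lam * uu i.
Proof.
move=> hk hi; rewrite -(eig_row i).
have -> : \sum_y M i y * uu y = \sum_y (if y \in S then M i y * uu y else 0)
    + \sum_y (if y \notin S then M i y * uu y else 0).
  by rewrite -big_split; apply: eq_bigr => y _; case: (y \in S); rewrite /= ?addr0 ?add0r.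
rewrite -(big_mkord xpredT (T i)) big_ltn; last by rewrite addn_gt0 hk orbT.
rewrite T0 //; congr (_ + _).
rewrite (eq_big_nat _ _ (F2 := fun p => \sum_y (if y \notin S then M i y * A p.-1 y else 0))); last first.
  by move=> p /andP [hp _]; case: p hp => // p _; rewrite TS.
rewrite exchange_big /=; apply: eq_bigr => y _.
case: ifP => hy; last by rewrite big1.
by rewrite -mulr_sumr Ashift.
Qed.

Lemma final_res (hu0 : u != 0) :
  eigenvalue (reduced_matrix E M lam) lam /\
  reduced_matrix E M lam *m restrict_tail u = lam *: restrict_tail u.
Proof.
have hk : (0 < k)%N.
  case: hS => /set0Pn [y hy] _ _; move: hy; rewrite inS => hy.
  by have hy2 : (y < m + k)%N := ltn_ord y; move: hy hy2; clear; lia.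
have hR : reduced_matrix E M lam *m restrict_tail u = lam *: restrict_tail u.
  apply/matrixP => a j; rewrite (ord1 j) !mxE.
  under eq_bigr => b _ do rewrite !mxE.
  have := sum_entries (rshift m a); rewrite (main_row _ hk); last by rewrite inS /= leq_addr.
  move=> h.
  exact: h.
split; last exact: hR.
rewrite /eigenvalue /eigenspace kermx_eq0 row_free_unit; apply/negP => hU.
have hv0 : restrict_tail u != 0.
  apply/negP => /eqP hz; move/negP: hu0; apply; apply/eqP/matrixP => x j.
  rewrite (ord1 j) [RHS]mxE.
  have hSz : forall y, y \in S -> uu y = 0.
    move=> y; rewrite inS => hy.
    have hlt : (y - m < k)%N by rewrite ltn_subLR //; exact: ltn_ord y.
    have := congr1 (fun A : 'cV[C]_k => A (Ordinal hlt) 0) hz; rewrite !mxE /=.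
    have -> : rshift m (Ordinal hlt) = y by apply: val_inj; rewrite /= subnKC.
    by [].
  case hx: (x \in S); first exact: hSz.
  rewrite -/(uu x) (u_AB m x (negbT hx)) B_zero1 ?hx // addr0 big1 // => q _.
  rewrite /A -[RHS](ssum0 q.+1); apply: eq_ssum => s _.
  by case: ifP => // /and3P [_ hl _]; rewrite hSz // mulr0.
apply: (negP hv0); apply/eqP.
have h0 : (reduced_matrix E M lam - lam%:M) *m restrict_tail u = 0.
  by rewrite mulmxBl mul_scalar_mx hR subrr.
by rewrite -(mulKmx hU (restrict_tail u)) h0 mulmx0.
Qed.

End Main.

Theorem mainTheorem1 (C : numClosedFieldType) (m k : nat)
    (E : rel 'I_(m + k)) (M : 'M[C]_(m + k))
    (hM : forall i j : 'I_(m + k), ~~ E i j -> M i j = 0)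
    (lam0 : C) (u : 'cV[C]_(m + k))
    (hu : M *m u = lam0 *: u) (hu0 : u != 0)
    (hS : structural_set E M lam0 (tail_set m k)) :
  eigenvalue (reduced_matrix E M lam0) lam0 /\
  reduced_matrix E M lam0 *m restrict_tail u = lam0 *: restrict_tail u.
Proof. exact: final_res. Qed.
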